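(* Every finite forest satisfies the bunkbed conjecture: for every forest $T$, every symmetric weight $\mu$ on $BB(T)$, and all $x,y\in V(T)$, $\mathbb P_{BB(T),\mu}(x^-\sim y^-)\ge \mathbb P_{BB(T),\mu}(x^-\sim y^+)$.
   Context: For a graph $G$, a weight is a function $\mu\colon E(G)\to[0,1]$; the associated edge-percolation probability space has sample space $\mathscr P(E(G))$, with $\mathbb P_{G,\mu}(X)=\prod_{e\in X}\mu(e)\prod_{e\notin X}(1-\mu(e))$ for $X\subseteq E(G)$, i.e. each edge $e$ is independently open with probability $\mu(e)$. For vertices $x,y$, $(x\sim y)$ is the event that $x$ and $y$ are joined by a path of open edges. The bunkbed graph $BB(G)=G\,\Box\,K_2$ has vertex set $V(G)\times\{0,1\}$, writing $x^-=(x,0)$, $x^+=(x,1)$, with edges $x^-y^-$ and $x^+y^+$ for every $xy\in E(G)$ and vertical edges $x^-x^+$ for every $x\in V(G)$. A weight $\mu$ on $BB(G)$ is symmetric if $\mu(x^-y^-)=\mu(x^+y^+)$ for every $xy\in E(G)$. *)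

(* Defs.v *)
From mathcomp Require Import all_boot all_order all_algebra.
Set Implicit Arguments. Unset Strict Implicit. Unset Printing Implicit Defensive.
Import Order.TTheory GRing.Theory Num.Theory.
Local Open Scope ring_scope.

Definition simple_graph (T : finType) (e : rel T) : Prop :=
  symmetric e /\ irreflexive e.

Definition edges (T : finType) (e : rel T) : {set {set T}} :=
  [set [set x; y] | x in T, y in T & e x y].

Definition forest (T : finType) (e : rel T) : Prop :=
  forall s : seq T, uniq s -> (2 < size s)%N -> ~~ cycle e s.

Definition config_prob (R : numDomainType) (T : finType) (e : rel T)
    (mu : {set T} -> R) (X : {set {set T}}) : R :=
  \prod_(f in edges e) (if f \in X then mu f else 1 - mu f).

Definition perc_prob (R : numDomainType) (T : finType) (e : rel T)
    (mu : {set T} -> R) (A : pred {set {set T}}) : R :=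
  \sum_(X : {set {set T}} | (X \subset edges e) && A X) config_prob e mu X.

Definition joined (T : finType) (X : {set {set T}}) (x y : T) : bool :=
  connect (fun u v => [set u; v] \in X) x y.

(* Bunkbed graph BB(G) = G \Box K_2 on V * bool; x^- = (x,false), x^+ = (x,true). *)
Definition bunkbed (V : finType) (e : rel V) : rel (V * bool) :=
  fun u v => ((u.2 == v.2) && e u.1 v.1) || ((u.1 == v.1) && (u.2 != v.2)).

Definition lower (V : Type) (x : V) : V * bool := (x, false).
Definition upper (V : Type) (x : V) : V * bool := (x, true).

Definition weight (R : numDomainType) (T : finType) (e : rel T)
    (mu : {set T} -> R) : Prop :=
  forall f, f \in edges e -> 0 <= mu f <= 1.

Definition symmetric_weight (R : numDomainType) (V : finType) (e : rel V)
    (mu : {set V * bool} -> R) : Prop :=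
  forall x y, e x y ->
    mu [set lower x; lower y] = mu [set upper x; upper y].

(* Main.v *)
Require Import Defs.
From mathcomp Require Import all_boot all_order all_algebra.
Set Implicit Arguments. Unset Strict Implicit. Unset Printing Implicit Defensive.
Import Order.TTheory GRing.Theory Num.Theory.

Lemma connect_ind' (T : finType) (r : rel T) (P : T -> Prop) a :
  P a -> (forall b c, connect r a b -> P b -> r b c -> P c) ->
  forall b, connect r a b -> P b.
Proof.
move=> Pa IH b /connectP [p]; elim/last_ind: p b => [|p z IHp] b.
  by move=> _ ->.
rewrite rcons_path last_rcons => /andP [pth rz] ->.
apply: (IH (last a p)) rz; first by apply/connectP; exists p.
exact: IHp.
Qed.

Lemma connect_map (T1 T2 : finType) (r1 : rel T1) (r2 : rel T2) (f : T1 -> T2) a b :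
  (forall u v, r1 u v -> connect r2 (f u) (f v)) -> connect r1 a b -> connect r2 (f a) (f b).
Proof.
move=> H; apply: (connect_ind' (P := fun c => connect r2 (f a) (f c))) => [|c d _ Hc /H Hcd]; first exact: connect0.
exact: connect_trans Hc Hcd.
Qed.

Section Forest.
Variables (V : finType) (e : rel V).
Hypotheses (esym : symmetric e) (eirr : irreflexive e) (efor : forest e).

Definition avoid (a b : V) : rel V := fun u v =>
  e u v && ~~ (((u == a) && (v == b)) || ((u == b) && (v == a))).

Lemma edge_cut a b : e a b -> connect (avoid a b) a b -> False.
Proof.
move=> eab /connectP [p pth lastp].
move: eab lastp; case: (shortenP pth) => p' pth' uq _ eab lastp.
have Hsub : subrel (avoid a b) e by move=> u v /andP [].
case: p' pth' uq eab lastp => [|z [|z' p'']] /= pth' uq eab lb.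
- by rewrite lb eirr in eab.
- move: pth'; rewrite /avoid -lb !eqxx /= andbT.
  by case: (e a b) => //=; rewrite orbC.
- idtac.
  have /negP H := efor (s := [:: a, z, z' & p'']) uq isT; apply: H.
  rewrite /cycle rcons_path.
  have -> : path e a [:: z, z' & p''] by apply: (sub_path Hsub); exact: pth'.
  by rewrite /= -lb esym.
Qed.
End Forest.

Lemma connect_sub' (T : finType) (r1 r2 : rel T) a b :
  (forall u v, r1 u v -> r2 u v) -> connect r1 a b -> connect r2 a b.
Proof.
move=> H; apply: (connect_map (f := id)) => u v /H; exact: connect1.
Qed.

Section BB.
Variables (V : finType) (e : rel V).
Hypotheses (esym : symmetric e) (eirr : irreflexive e) (efor : forest e).
Variable x : V.

Local Notation BT := (V * bool)%type.
Local Notation bb := (bunkbed e).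
Local Notation E := (edges bb).

Definition adj (X : {set {set BT}}) : rel BT := fun a b => [set a; b] \in X.

Lemma adjC (X : {set {set BT}}) : symmetric (adj X).
Proof. by move=> a b; rewrite /adj setUC. Qed.

Lemma bbC : symmetric bb.
Proof. by move=> [a i] [b j]; rewrite /bunkbed /= esym (eq_sym a) (eq_sym i). Qed.

Lemma bbirr : irreflexive bb.
Proof. by move=> [a i]; rewrite /bunkbed /= eirr !eqxx. Qed.

Lemma bb_cases a b : bb a b -> (a.2 = b.2 /\ e a.1 b.1) \/ (a.1 = b.1 /\ a.2 = ~~ b.2).
Proof.
case: a b => [a i] [b j]; rewrite /bunkbed /= => /orP [/andP [/eqP -> ->]|/andP [/eqP -> ]].
  by left.
by case: i j => [] [] //= _; right.
Qed.

Lemma bb_e a b : bb a b -> a.1 != b.1 -> e a.1 b.1.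
Proof. by case/bb_cases => [[_ ->]|[-> _]] //; rewrite eqxx. Qed.

Lemma adjE (X : {set {set BT}}) a b : X \subset E -> adj X a b -> bb a b.
Proof.
move=> /subsetP XE H0; have := XE _ H0; case/imset2P => c d _; rewrite inE => /andP [_ bcd] H.
have Ha : a \in [set c; d] by rewrite -H set21.
have Hb : b \in [set c; d] by rewrite -H set22.
have Hc : c \in [set a; b] by rewrite H set21.
have Hd : d \in [set a; b] by rewrite H set22.
have cd : c != d by apply: contraTneq bcd => ->; rewrite bbirr.
case/set2P: Ha => ?; subst a.
  case/set2P: Hb => ?; subst b => //.
  by case/set2P: Hd => /eqP; rewrite eq_sym (negbTE cd).
case/set2P: Hb => ?; subst b; first by rewrite bbC.
by case/set2P: Hc => /eqP; rewrite (negbTE cd).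
Qed.

Definition Cx (X : {set {set BT}}) (c : BT) := connect (adj X) (x, false) c.
Definition Dx (X : {set {set BT}}) : {set V} := [set v | Cx X (v, false) && Cx X (v, true)].
Definition rD (D : {set V}) : rel V := fun u v => e u v && (u \notin D) && (v \notin D).
Definition Uof (D : {set V}) : {set V} := [set u | (u \notin D) && connect (rD D) x u].
Definition Ux (X : {set {set BT}}) := Uof (Dx X).
Definition Wx (X : {set {set BT}}) := ~: Ux X.

Lemma Uof_notD (D : {set V}) u : u \in Uof D -> u \notin D.
Proof. by rewrite inE => /andP []. Qed.

Lemma x_Uof (D : {set V}) : (x \in Uof D) = (x \notin D).
Proof. by rewrite inE connect0 andbT. Qed.

Lemma Uof_bound (D : {set V}) u w : u \in Uof D -> e u w -> w \notin D -> w \in Uof D.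
Proof.
rewrite !inE => /andP [uD cu] euw wD; rewrite wD /=.
by apply: connect_trans cu (connect1 _); rewrite /rD euw uD wD.
Qed.

Lemma bound_D (D : {set V}) u w : u \in Uof D -> e u w -> w \notin Uof D -> w \in D.
Proof. by move=> uU euw; apply: contraNT => wD; exact: Uof_bound uU euw wD. Qed.

Lemma Uof0 (D : {set V}) : x \in D -> forall u, u \notin Uof D.
Proof.
move=> xD u; rewrite inE; apply/negP => /andP [uD cu].
have : u = x.
  apply: (connect_ind' (P := fun u => u = x)) cu => // b c _ -> /andP [/andP [_ xD'] _].
  by rewrite xD in xD'.
by move=> ux; rewrite ux xD in uD.
Qed.

Lemma rDC (D : {set V}) : symmetric (rD D).
Proof. by move=> u v; rewrite /rD esym -!andbA (andbC (u \notin D)). Qed.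

Lemma Uof_conn (D : {set V}) u v : u \in Uof D -> v \in Uof D -> connect (rD D) u v.
Proof.
rewrite !inE => /andP [_ cu] /andP [_ cv].
have cu' : connect (rD D) u x by rewrite (sym_connect_sym (rDC D)).
exact: connect_trans cu' cv.
Qed.

Definition sg (W : {set V}) (c : BT) : BT := (c.1, addb (c.1 \in W) c.2).

Lemma sgK (W : {set V}) : involutive (sg W).
Proof. by move=> [v b]; rewrite /sg /= addKb. Qed.

Lemma sg1 (W : {set V}) c : (sg W c).1 = c.1.
Proof. by []. Qed.

Lemma sg_id (W : {set V}) c : c.1 \notin W -> sg W c = c.
Proof. by case: c => v b /= /negbTE; rewrite /sg /= => ->. Qed.

Lemma sgW (W : {set V}) v b : v \in W -> sg W (v, b) = (v, ~~ b).
Proof. by rewrite /sg /= => ->. Qed.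

Definition flipE (W : {set V}) (f : {set BT}) : {set BT} :=
  if f \subset [set c : BT | c.1 \in W] then sg W @: f else f.

Lemma flipE2 (W : {set V}) a b : flipE W [set a; b] =
  if (a.1 \in W) && (b.1 \in W) then [set sg W a; sg W b] else [set a; b].
Proof. by rewrite /flipE subUset !sub1set !inE imsetU !imset_set1. Qed.

Lemma flipEK (W : {set V}) : involutive (flipE W).
Proof.
move=> f; rewrite {2}/flipE; case: ifP => H; last by rewrite /flipE H.
have H' : sg W @: f \subset [set c : BT | c.1 \in W].
  apply/subsetP => c /imsetP [d df ->]; rewrite inE sg1.
  by move/subsetP: H => /(_ d df); rewrite inE.
by rewrite /flipE H' -imset_comp (eq_imset _ (sgK W)) imset_id.
Qed.

Definition phi W (X : {set {set BT}}) := flipE W @: X.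

Lemma phiK (W : {set V}) : involutive (phi W).
Proof. by move=> X; rewrite /phi -imset_comp (eq_imset _ (flipEK W)) imset_id. Qed.

Lemma mem_phi (W : {set V}) (X : {set {set BT}}) f : (flipE W f \in phi W X) = (f \in X).
Proof. by rewrite /phi mem_imset //; exact: can_inj (flipEK W). Qed.

Lemma adj_phi (W : {set V}) (X : {set {set BT}}) a b : adj (phi W X) a b =
  if (a.1 \in W) && (b.1 \in W) then adj X (sg W a) (sg W b) else adj X a b.
Proof.
by rewrite /adj -{1}(flipEK W [set a; b]) mem_phi flipE2; case: ifP.
Qed.

Lemma flipE_E (W : {set V}) f : f \in E -> flipE W f \in E.
Proof.
case/imset2P => a b _; rewrite inE => /andP [_ abb] ->; rewrite flipE2.
case: ifP => [/andP [aW bW]|_]; last by apply/imset2P; exists a b; rewrite ?inE.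
apply/imset2P; exists (sg W a) (sg W b) => //; rewrite inE /=.
move: abb; case: a b aW bW => [u i] [v j] /= uW vW; rewrite !sgW //.
by rewrite /bunkbed /=; case: i j => [] [].
Qed.

Lemma phi_sub (W : {set V}) (X : {set {set BT}}) : X \subset E -> phi W X \subset E.
Proof.
move=> XE; apply/subsetP => _ /imsetP [f fX ->]; apply: flipE_E.
exact: (subsetP XE).
Qed.

Section Core.
Variable X : {set {set BT}}.
Hypothesis XE : X \subset E.
Local Notation C := (Cx X).
Local Notation D := (Dx X).
Local Notation U := (Ux X).
Local Notation W := (Wx X).

Lemma C_both v b : v \in D -> C (v, b).
Proof. by rewrite inE => /andP []; case: b. Qed.

Lemma C_step a b : C a -> adj X a b -> C b.
Proof. by move=> Ca ab; apply: connect_trans Ca (connect1 ab). Qed.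

Lemma adj_cases a b : adj X a b -> (a.2 = b.2 /\ e a.1 b.1) \/ (a.1 = b.1 /\ a.2 = ~~ b.2).
Proof. by move/(adjE XE)/bb_cases. Qed.

Lemma adj_e a b : adj X a b -> a.1 != b.1 -> e a.1 b.1.
Proof. by move/(adjE XE)/bb_e. Qed.

Lemma U_notD u : u \in U -> u \notin D.
Proof. exact: Uof_notD. Qed.

Definition rU : rel BT := fun a b => adj X a b && (a.1 \in U) && (b.1 \in U).
Definition CU c := connect rU (x, false) c.

Lemma CU_low c : CU c -> c.2 = false /\ C c.
Proof.
apply: (connect_ind' (P := fun c => c.2 = false /\ C c)).
  by split => //; exact: connect0.
move=> [bv bl] [cv cl] _ /= [bl0 Cb] /andP [/andP [abc bU] cU].
have Cc := C_step Cb abc; split => //.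
case: (adj_cases abc) => [[/= <- _] //|[/= bc]]; subst bl bv.
case: cl abc Cc cU {bU} => //= _ Cc cU; exfalso.
have : cv \in D by rewrite inE Cb Cc.
by move/negP: (U_notD cU).
Qed.

Definition rW : rel BT := fun a b => adj X a b && (a.1 \notin U) && (b.1 \notin U).
Definition pW : rel V := fun u v => e u v && (u \notin U) && (v \notin U).

Lemma rW_proj a b : connect rW a b -> connect pW a.1 b.1.
Proof.
apply: connect_map => [[u i] [v j]] /andP [/andP [ab uU] vU].
case: (adj_cases ab) => [[_ euv]|[/= -> _]]; last exact: connect0.
by apply: connect1; rewrite /pW euv uU vU.
Qed.

Lemma exit_unique u0 d0 u1 d1 : u0 \in U -> d0 \notin U -> e u0 d0 ->
  u1 \in U -> d1 \notin U -> e d1 u1 -> connect pW d0 d1 -> d1 = d0 /\ u1 = u0.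
Proof.
move=> u0U d0U e0 u1U d1U e1 c01.
have d0D : d0 \in D := bound_D u0U e0 d0U.
case: (boolP ((d1 == d0) && (u1 == u0))) => [/andP [/eqP -> /eqP ->] //| Hne].
exfalso; apply: (edge_cut esym eirr efor (a := d0) (b := u0)); first by rewrite esym.
have nu0 : forall w, w \notin U -> (w == u0) = false.
  by move=> w wU; apply/negbTE; apply: contraNneq wU => ->.
have nd0 : forall w, w \notin D -> (w == d0) = false.
  by move=> w wD; apply/negbTE; apply: contraNneq wD => ->.
apply: (connect_trans (y := d1)).
  apply: connect_sub' c01 => a b /andP [/andP [eab aU] bU].
  by rewrite /avoid eab (nu0 _ aU) (nu0 _ bU) !andbF.
apply: (connect_trans (y := u1)).
  apply: connect1; rewrite /avoid e1 (nu0 _ d1U) /= orbF.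
  exact: Hne.
apply: connect_sub' (Uof_conn u1U u0U) => a b /andP [/andP [eab aD] bD].
by rewrite /avoid eab (nd0 _ aD) (nd0 _ bD) /= andbF.
Qed.

Lemma KL c : x \in U -> C c ->
  (c.1 \in U -> CU c) /\
  (c.1 \notin U -> exists u0 d0, [/\ CU (u0, false), (u0 \in U) && (d0 \notin U), e u0 d0,
      adj X (u0, false) (d0, false) & connect rW (d0, false) c]).
Proof.
move=> xU; apply: (connect_ind' (P := fun c =>
  (c.1 \in U -> CU c) /\
  (c.1 \notin U -> exists u0 d0, [/\ CU (u0, false), (u0 \in U) && (d0 \notin U), e u0 d0,
      adj X (u0, false) (d0, false) & connect rW (d0, false) c]))).
  by split => [_|/=]; [exact: connect0 | rewrite xU].
move=> [bv bl] [cv cl] Cb [Hb1 Hb2] abc /=.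
case: (boolP (bv \in U)) => bU; case: (boolP (cv \in U)) => cU.
- split=> // _; apply: connect_trans (Hb1 bU) (connect1 _).
  by rewrite /rU abc bU cU.
- split=> // _.
  have [bl0 _] := CU_low (Hb1 bU); simpl in bl0; subst bl.
  case: (adj_cases abc) => [[/= bc ebc]|[/= bc _]]; last by subst; rewrite bU in cU.
  subst cl; exists bv, cv; split => //; first exact: (Hb1 bU).
    by rewrite bU cU.
- split=> // _.
  have [u0 [d0 [CU0 /andP [u0U d0U] e0 a0 cw]]] := Hb2 bU.
  case: (adj_cases abc) => [[/= bc ebc]|[/= bc _]]; last by subst; rewrite cU in bU.
  subst cl.
  have [eb ec] := exit_unique u0U d0U e0 cU bU ebc (rW_proj cw).
  subst bv cv.
  case: bl abc Cb Hb1 Hb2 cw => // abc Cb _ _ _; exfalso.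
  have Cc := C_step Cb abc.
  have [_ C0] := CU_low CU0; have : u0 \in D by rewrite inE Cc C0.
  by move/negP: (U_notD u0U).
- split=> // _.
  have [u0 [d0 [CU0 /andP [u0U d0U] e0 a0 cw]]] := Hb2 bU.
  exists u0, d0; split => //; first by rewrite u0U d0U.
  by apply: connect_trans cw (connect1 _); rewrite /rW abc bU cU.
Qed.

Lemma U_empty : x \notin U -> forall u, u \notin U.
Proof. by move=> xU; apply: Uof0; move: xU; rewrite /Ux x_Uof negbK. Qed.

Lemma C_U_low c : C c -> c.1 \in U -> c.2 = false.
Proof.
case: (boolP (x \in U)) => xU; last by move=> _; rewrite (negbTE (U_empty xU _)).
move=> Cc cU; have [H1 _] := KL xU Cc.
by case: (CU_low (H1 cU)).
Qed.

Lemma inW v : (v \in W) = (v \notin U).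
Proof. by rewrite inE. Qed.

Local Notation X' := (phi W X).

Lemma P1 c : Cx X' c -> C (sg W c).
Proof.
apply: (connect_ind' (P := fun c => C (sg W c))).
  case: (boolP (x \in U)) => xU.
    by rewrite sg_id ?inW ?xU //; exact: connect0.
  by apply: C_both; move: xU; rewrite /Ux x_Uof negbK.
move=> [bv bl] [cv cl] _ Hb; rewrite adj_phi; case: ifP => [/andP [bW cW] H | Hnot H].
  exact: C_step Hb H.
case: (boolP (bv \in W)) => bW.
  rewrite bW /= in Hnot.
  have bc : bv != cv by apply: contraTneq bW => ->; rewrite Hnot.
  have ebc := adj_e H bc; rewrite /= esym in ebc.
  have cU : cv \in U by rewrite -[cv \in U]negbK -inW Hnot.
  have bD : bv \in D by apply: (bound_D cU ebc); rewrite -inW.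
  rewrite sg_id ?Hnot //; exact: C_step (C_both _ bD) H.
rewrite sg_id // in Hb.
have Cc := C_step Hb H.
case: (boolP (cv \in W)) => cW; last by rewrite sg_id.
have bc : bv != cv by apply: contraNneq bW => ->.
have ebc := adj_e H bc.
have cD : cv \in D.
  apply: (bound_D (u := bv)) ebc _; first by rewrite -[_ \in Uof _]negbK -inW.
  by rewrite -inW.
by rewrite /sg; apply: C_both.
Qed.

Lemma CU_C' c : CU c -> Cx X' c.
Proof.
apply: connect_sub' => a b /andP [/andP [ab aU] bU].
by rewrite adj_phi inW aU.
Qed.

Lemma rW_flip a b : connect rW a b -> connect (adj X') (sg W a) (sg W b).
Proof.
apply: connect_map => u v /andP [/andP [uv uU] vU]; apply: connect1.
by rewrite adj_phi !sg1 !inW uU vU !sgK.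
Qed.

Lemma C'sym a b : connect (adj X') a b = connect (adj X') b a.
Proof. exact: (sym_connect_sym (adjC _)). Qed.

Lemma P2 c : C c -> Cx X' (sg W c).
Proof.
move=> Cc; case: (boolP (x \in U)) => xU; last first.
  have allU := U_empty xU.
  have xD : x \in D by move: xU; rewrite /Ux x_Uof negbK.
  have cw : forall c, C c -> connect rW (x, false) c.
    move=> c0; apply: connect_sub' => a b ab.
    by rewrite /rW ab !allU.
  have f1 := rW_flip (cw _ (C_both true xD)).
  have f2 := rW_flip (cw _ Cc).
  rewrite !sgW ?inW ?allU //= in f1 f2.
  apply: connect_trans _ f2; by rewrite C'sym.
have [H1 H2] := KL xU Cc.
case: (boolP (c.1 \in U)) => cU.
  by rewrite sg_id ?inW ?cU //; exact: CU_C' (H1 cU).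
have [u0 [d0 [CU0 /andP [u0U d0U] e0 a0 cw]]] := H2 cU.
have C'd0 : Cx X' (d0, false).
  apply: connect_trans (CU_C' CU0) (connect1 _).
  by rewrite adj_phi /= inW u0U.
have d0D : d0 \in D := bound_D u0U e0 d0U.
have [_ H3] := KL xU (C_both true d0D).
have [u1 [d1 [_ /andP [u1U d1U] e1 _ cw1]]] := H3 d0U.
have e0' : e d0 u0 by rewrite esym.
have [ed _] := exit_unique u1U d1U e1 u0U d0U e0' (rW_proj cw1).
subst d1.
have f1 := rW_flip cw1; have f2 := rW_flip cw.
rewrite !sgW ?inW // in f1 f2.
apply: connect_trans _ f2; apply: connect_trans C'd0 _; by rewrite C'sym.
Qed.

Lemma C_phi c : Cx X' c = C (sg W c).
Proof. by apply/idP/idP => [/P1 // | /P2]; rewrite sgK. Qed.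

Lemma D_phi : Dx X' = D.
Proof.
apply/setP => v; rewrite !inE !C_phi /sg /=.
by case: (v \in W) => //=; rewrite andbC.
Qed.

Lemma W_phi : Wx X' = W.
Proof. by rewrite /Wx /Ux D_phi. Qed.

Lemma P3 y : C (y, true) -> Cx X' (y, false).
Proof.
move=> Cy; have yW : y \in W.
  by rewrite inW; apply/negP => yU; have := C_U_low Cy yU.
by have := P2 Cy; rewrite sgW.
Qed.
End Core.

Definition Phi (X : {set {set BT}}) := if X \subset E then phi (Wx X) X else X.

Lemma PhiK : involutive Phi.
Proof.
move=> X; rewrite {2}/Phi; case: ifP => XE; last by rewrite /Phi XE.
by rewrite /Phi phi_sub // W_phi // phiK.
Qed.

Lemma Phi_A (X : {set {set BT}}) y : X \subset E -> Cx X (y, true) -> Cx (Phi X) (y, false).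
Proof. by move=> XE; rewrite /Phi XE; exact: P3. Qed.

Section Prob.
Local Open Scope ring_scope.
Variables (R : realFieldType) (mu : {set BT} -> R).
Hypotheses (wmu : weight bb mu) (smu : symmetric_weight e mu).

Lemma mu_flip (W : {set V}) f : f \in E -> mu (flipE W f) = mu f.
Proof.
case/imset2P => a b _; rewrite inE => /andP [_ abb] ->; rewrite flipE2.
case: ifP => // /andP [aW bW].
move: abb; case: a b aW bW => [u i] [v j] /= uW vW; rewrite !sgW //.
rewrite /bunkbed /= => /orP [/andP [/eqP ij euv]|/andP [/eqP uv ij]].
  subst j; have := smu euv; rewrite /lower /upper.
  by case: i => ->.
by subst v; case: i j ij => [] [] // _; rewrite setUC.
Qed.

Lemma cp_phi (W : {set V}) (X : {set {set BT}}) :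
  config_prob bb mu (phi W X) = config_prob bb mu X.
Proof.
rewrite /config_prob (reindex_inj (can_inj (flipEK W))) /=.
apply: eq_big => [f|f fE].
  apply/idP/idP => [H|H]; last exact: flipE_E.
  by move: (flipE_E W H); rewrite flipEK.
move: (flipE_E W fE); rewrite flipEK => fE'.
by rewrite mem_phi mu_flip.
Qed.

Lemma cp_ge0 (X : {set {set BT}}) : 0 <= config_prob bb mu X.
Proof.
apply: prodr_ge0 => f fE; have /andP [h0 h1] := wmu fE.
by case: ifP => _ //; rewrite subr_ge0.
Qed.

Lemma main y : perc_prob bb mu (fun X => joined X (lower x) (upper y))
  <= perc_prob bb mu (fun X => joined X (lower x) (lower y)).
Proof.
rewrite /perc_prob (reindex_inj (can_inj PhiK)) /=.
rewrite [leLHS]big_mkcond [leRHS]big_mkcond /=; apply: ler_sum => X _.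
case: ifP => [/andP [PE PA] | _]; last by case: ifP => _ //; exact: cp_ge0.
have XE : X \subset E by apply: contraTT PE => XE; rewrite /Phi (negbTE XE).
have B : joined X (lower x) (lower y).
  have := Phi_A PE PA; rewrite PhiK; exact.
by rewrite XE B /= /Phi XE cp_phi.
Qed.
End Prob.

End BB.

Local Open Scope ring_scope.
Theorem corollary3p7 (R : realFieldType) (V : finType) (e : rel V)
    (mu : {set V * bool} -> R) (x y : V) :
  simple_graph e -> forest e ->
  weight (bunkbed e) mu -> symmetric_weight e mu ->
  perc_prob (bunkbed e) mu (fun X => joined X (lower x) (upper y))
    <= perc_prob (bunkbed e) mu (fun X => joined X (lower x) (lower y)).
Proof.
move=> [esym eirr] efor wmu smu.
exact: (main esym eirr efor x wmu smu y).
Qed.
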